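(* For every integer $j\ge1$, the graph $K_{2j+4}^{(j+2)*}$ on $n=2j+4$ vertices satisfies \[\lambda_1-\lambda_{n-j}=\frac{(2j+5)+\sqrt{4j^2+16j+17}}{2},\] and hence \[s_{0,j}\ge\frac{(2j+5)+\sqrt{4j^2+16j+17}}{4(j+2)}.\]
   Context: $K_m^{t*}$ denotes the complete graph $K_m$ with loops added at exactly $t$ of its vertices. Graphs with loops are identified with their symmetric $(0,1)$ adjacency matrices (diagonal entry $1$ iff loop), eigenvalues listed $\lambda_1\ge\cdots\ge\lambda_n$. For a simple graph $G$ on $n$ vertices, ${\rm spread}_{i,j}(G)=\lambda_{i+1}(G)-\lambda_{n-j}(G)$; ${\rm spread}_{i,j}(n)$ is its maximum over simple graphs on $n$ vertices and $s_{i,j}=\lim_{n\to\infty}{\rm spread}_{i,j}(n)/n$ (known to exist, and known to equal the analogous limit taken over graphs with at most one loop per vertex). *)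

(* Defs.v *)
From HB Require Import structures.
From mathcomp Require Import all_boot all_order all_algebra.
From mathcomp Require Import all_classical all_reals all_analysis.
Set Implicit Arguments. Unset Strict Implicit. Unset Printing Implicit Defensive.
Import Order.TTheory GRing.Theory Num.Theory.
Import numFieldNormedType.Exports.
Local Open Scope ring_scope.

Section Spectral.
Variable R : realType.

Definition is_spectrum n (A : 'M[R]_n) (s : seq R) : Prop :=
  sorted (fun x y : R => y <= x) s /\ char_poly A = \prod_(x <- s) ('X - x%:P).

(* The (non-increasingly ordered) eigenvalue list of A (for real symmetric
   matrices such a list exists and is unique). *)
Definition eigs n (A : 'M[R]_n) : seq R := xget [::] (is_spectrum A).

(* lambda A k = lambda_k(A), 1-indexed: lambda_1 >= lambda_2 >= ... >= lambda_n *)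
Definition lambda n (A : 'M[R]_n) (k : nat) : R := nth 0 (eigs A) k.-1.

Definition adj n (e : 'M[bool]_n) : 'M[R]_n := \matrix_(i, j) (e i j)%:R.

Definition simple_graph n (e : 'M[bool]_n) : bool :=
  [forall i, forall j, e i j == e j i] && [forall i, ~~ e i i].

(* K_n with loops exactly at the vertices of S (so K_n^{|S|*}) *)
Definition looped_complete n (S : {set 'I_n}) : 'M[bool]_n :=
  \matrix_(i, j) (if i == j then i \in S else true).

Definition spread_graph (i j : nat) n (e : 'M[bool]_n) : R :=
  lambda (adj e) i.+1 - lambda (adj e) (n - j).

(* spread_{i,j}(n): maximum over simple graphs on n vertices
   (the set is nonempty: the empty graph is simple, used as seed). *)
Definition spread_max (i j n : nat) : R :=
  \big[Num.max/spread_graph i j (0 : 'M[bool]_n)]_(e : 'M[bool]_n | simple_graph e)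
     spread_graph i j e.

End Spectral.

(* Main.v *)
Require Import Defs.
From HB Require Import structures.
From mathcomp Require Import all_boot all_order all_algebra.
From mathcomp Require Import all_classical all_reals all_analysis.
From mathcomp Require Import ring lra zify.
Import Order.TTheory GRing.Theory Num.Theory.
Import numFieldNormedType.Exports.
Local Open Scope classical_set_scope.
Local Open Scope ring_scope.

Module Aux.
Set Implicit Arguments. Unset Strict Implicit. Unset Printing Implicit Defensive.

Lemma det_WA (F : comNzRingType) m n (U : 'M[F]_(n, m)) (V : 'M[F]_(m, n)) :
  \det (1%:M - U *m V) = \det (1%:M - V *m U).
Proof.
have E1 : block_mx 1%:M U V 1%:M =
   block_mx 1%:M 0 V 1%:M *m block_mx 1%:M U 0 (1%:M - V *m U).
  by rewrite mulmx_block !mul1mx !mul0mx !mulmx1 ?addr0 ?add0r addrC subrK.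
have E2 : block_mx 1%:M U V 1%:M =
   block_mx (1%:M - U *m V) U 0 1%:M *m block_mx 1%:M 0 V 1%:M.
  by rewrite mulmx_block !mul1mx !mul0mx !mulmx1 ?mulmx0 ?addr0 ?add0r subrK.
have := congr1 determinant E1; rewrite E2 !det_mulmx det_ublock det_lblock.
by rewrite det_ublock !det1 ?mul1r ?mulr1.
Qed.

Lemma horner_char_poly (F : comNzRingType) n (A : 'M[F]_n) x :
  (char_poly A).[x] = \det (x%:M - A).
Proof.
rewrite /char_poly -horner_evalE -det_map_mx; congr determinant.
by apply/matrixP => i j; rewrite !mxE; rewrite -[LHS]/(_.[x]) hornerD hornerN hornerMn hornerX hornerC.
Qed.

Lemma poly_eq_big (F : realFieldType) (p q : {poly F}) b :
  (forall x, b < x -> p.[x] = q.[x]) -> p = q.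
Proof.
move=> H; apply/eqP; rewrite -subr_eq0; apply/eqP.
pose rs := [seq `|b| + (k.+1)%:R | k <- iota 0 (size (p - q))].
apply: (@roots_geq_poly_eq0 _ _ rs).
- apply/allP => x /mapP [k _ ->]; rewrite /root hornerD hornerN H ?subrr //.
  by apply: (le_lt_trans (ler_norm b)); rewrite ltrDl ltr0Sn.
- rewrite map_inj_uniq ?iota_uniq // => k1 k2 /addrI /eqP; rewrite eqr_nat eqSS.
  by move/eqP.
- by rewrite size_map size_iota.
Qed.

Lemma sum_sel (F : comNzRingType) m (k : 'I_m) (f : 'I_m -> F) :
  \sum_i (k == i)%:R * f i = f k.
Proof.
rewrite (bigD1 k) //= eqxx mul1r big1 ?addr0 // => i /negPf.
by rewrite eq_sym => ->; rewrite mul0r.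
Qed.

Definition cnt N m (c : 'I_N -> 'I_m) (i : 'I_m) := #|[pred u | c u == i]|.

Definition Qmx (F : comNzRingType) N m (c : 'I_N -> 'I_m) (B : 'M[F]_m) (d : 'I_m -> F) : 'M[F]_m :=
  \matrix_(i, l) ((cnt c i)%:R * B i l + (i == l)%:R * d i).

Lemma pointwise (F : realFieldType) N m (c : 'I_N -> 'I_m) (B : 'M[F]_m) (d : 'I_m -> F)
  (A : 'M[F]_N) x :
  (forall u v, A u v = B (c u) (c v) + (u == v)%:R * d (c u)) ->
  (forall i, 0 < cnt c i)%N -> (forall i, x != d i) ->
  \det (x%:M - A) = (\prod_i (x - d i) ^+ (cnt c i).-1) * \det (x%:M - Qmx c B d).
Proof.
move=> HA Hc Hx.
pose w u := x - d (c u).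
have wN0 : forall u, w u != 0 by move=> u; rewrite subr_eq0 Hx.
pose E := diag_mx (\row_u w u).
pose Ei := diag_mx (\row_u (w u)^-1).
pose C : 'M[F]_(N, m) := \matrix_(u, i) (c u == i)%:R.
have HEi : E *m Ei = 1%:M.
  apply/matrixP => u v; rewrite mul_diag_mx !mxE.
  by case: (u == v); rewrite ?mulr1n ?mulr0n ?mulr0 ?divff.
have HCBC : forall u v, (C *m B *m C^T) u v = B (c u) (c v).
  move=> u v; rewrite !mxE.
  have HCB : forall u l, (C *m B) u l = B (c u) l.
    move=> u' l; rewrite !mxE; under eq_bigr => j _ do rewrite mxE.
    by rewrite sum_sel.
  under eq_bigr => l _ do rewrite HCB !mxE mulrC.
  by rewrite sum_sel.
have HX : x%:M - A = E *m (1%:M - (Ei *m C *m B) *m C^T).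
  rewrite mulmxBr mulmx1 !mulmxA HEi mul1mx.
  apply/matrixP => u v.
  have -> : (E - C *m B *m C^T) u v = E u v - B (c u) (c v).
  by rewrite mxE [in X in _ + X]mxE HCBC.
  rewrite /E !mxE HA /w.
  by case: (u == v); rewrite ?mulr1n ?mulr0n ?mul1r ?mul0r; ring.
pose Lam := diag_mx (\row_i ((cnt c i)%:R * (x - d i)^-1)).
have HL : C^T *m (Ei *m C *m B) = Lam *m B.
  rewrite !mulmxA; congr (_ *m _).
  apply/matrixP => i l; rewrite mul_mx_diag !mxE.
  transitivity (\sum_u (c u == i)%:R * ((x - d i)^-1 *+ (i == l))).
    apply: eq_bigr => u _; rewrite !mxE /w.
    case: (eqVneq (c u) i) => [<-|]; last by rewrite !mul0r.
    by case: (c u == l); rewrite mul1r ?mulr1 ?mulr0 ?mulr1n ?mulr0n.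
  rewrite -big_distrl /=.
  have -> : \sum_u (c u == i)%:R = (cnt c i)%:R :> F.
    rewrite /cnt -(sumr_const [pred u | c u == i] (1 : F)) [RHS]big_mkcond /=.
    by apply: eq_bigr => u _; rewrite inE; case: (c u == i).
  by case: (i == l); rewrite ?mulr1n ?mulr0n ?mulr0.
rewrite HX det_mulmx det_WA HL.
have HdE : \det E = \prod_i (x - d i) ^+ cnt c i.
  rewrite det_diag (partition_big c predT) //=.
  apply: eq_bigr => i _.
  rewrite (eq_bigr (fun _ => x - d i)); last first.
    by move=> u /eqP <-; rewrite mxE.
  by rewrite prodr_const.
have Hsplit : \prod_i (x - d i) ^+ cnt c i =
   (\prod_i (x - d i) ^+ (cnt c i).-1) * \prod_i (x - d i).
  rewrite -big_split /=; apply: eq_bigr => i _.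
  by rewrite -exprSr prednK.
rewrite HdE Hsplit -mulrA; congr (_ * _).
pose D' := diag_mx (\row_i (x - d i)).
have -> : \prod_i (x - d i) = \det D' by rewrite det_diag; apply: eq_bigr => i _; rewrite mxE.
rewrite -det_mulmx; congr determinant.
have HDL : D' *m Lam = diag_mx (\row_i (cnt c i)%:R).
  apply/matrixP => i l; rewrite mul_diag_mx !mxE.
  case: (i == l); rewrite ?mulr1n ?mulr0n ?mulr0 //.
  by rewrite mulrCA divff ?mulr1 // subr_eq0 Hx.
rewrite mulmxBr mulmx1 mulmxA HDL mul_diag_mx.
apply/matrixP => i l; rewrite !mxE.
by case: (i == l); rewrite ?mulr1n ?mulr0n ?mul1r ?mul0r; ring.
Qed.

Lemma classL (F : realFieldType) N m (c : 'I_N -> 'I_m) (B : 'M[F]_m) (d : 'I_m -> F)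
  (A : 'M[F]_N) :
  (forall u v, A u v = B (c u) (c v) + (u == v)%:R * d (c u)) ->
  (forall i, 0 < cnt c i)%N ->
  char_poly A = (\prod_i ('X - (d i)%:P) ^+ (cnt c i).-1) * char_poly (Qmx c B d).
Proof.
move=> HA Hc; apply: (@poly_eq_big _ _ _ (\sum_i `|d i|)) => x Hx.
rewrite hornerM horner_prod !horner_char_poly (pointwise HA Hc).
  by congr (_ * _); apply: eq_bigr => i _; rewrite horner_exp hornerXsubC.
move=> i; apply/negP => /eqP Hxi; move: Hx; rewrite Hxi; apply/negP; rewrite -leNgt.
rewrite (bigD1 i) //=; apply: le_trans (ler_norm _) _.
by rewrite lerDl sumr_ge0.
Qed.

Lemma det22 (F : comNzRingType) (M : 'M[F]_2) :
  \det M = M 0 0 * M 1 1 - M 0 1 * M 1 0.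
Proof.
rewrite (expand_det_row _ 0) !big_ord_recl big_ord0 addr0 /cofactor !det_mx11 !mxE /=.
have e1 : lift (0 : 'I_2) (0 : 'I_1) = 1 by apply: val_inj.
have e2 : lift (ord0 : 'I_2) (ord0 : 'I_1) = 1 by apply: val_inj.
have e3 : lift (1 : 'I_2) (0 : 'I_1) = 0 by apply: val_inj.
have e4 : lift (1 : 'I_2) (ord0 : 'I_1) = 0 by apply: val_inj.
have e5 : (ord0 : 'I_2) = 0 by [].
rewrite e1 ?e3 ?e4 ?e5 /bump /= expr0 expr1 !mul1r mulN1r; ring.
Qed.


Lemma char_poly22 (F : comNzRingType) (M : 'M[F]_2) r1 r2 :
  r1 + r2 = M 0 0 + M 1 1 -> r1 * r2 = M 0 0 * M 1 1 - M 0 1 * M 1 0 ->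
  char_poly M = ('X - r1%:P) * ('X - r2%:P).
Proof.
move=> Hs Hp.
have -> : ('X - r1%:P) * ('X - r2%:P) = 'X^2 - (r1 + r2)%:P * 'X + (r1 * r2)%:P.
  by rewrite polyCD polyCM; ring.
rewrite Hs Hp /char_poly det22 /char_poly_mx !mxE /=.
rewrite polyCB !polyCD !polyCM; ring.
Qed.

Lemma lim_lb (R : realType) (f : nat -> R) (l c : R) (g : nat -> nat) :
  (forall k, (k <= g k)%N) ->
  (forall k, (0 < k)%N -> c - (k%:R)^-1 <= f (g k)) ->
  f @ \oo --> l -> c <= l.
Proof.
move=> Hg Hb Hf; rewrite leNgt; apply/negP => hlc.
have ep : 0 < (c - l) / 2 by rewrite divr_gt0 // subr_gt0.
move/cvgrPdist_lt: Hf => /(_ _ ep) [N0 _ HN0].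
pose k := (N0 + Num.truncn (2 / (c - l))).+1.
have kpos : (0 < k)%N by [].
have Hk : (2 / (c - l)) < k%:R.
  by apply: lt_le_trans (truncnS_gt _) _; rewrite ler_nat /k ltnS leq_addl.
have H1 := Hb k kpos.
have H2 : `|l - f (g k)| < (c - l) / 2.
  apply: HN0; rewrite /=; apply: leq_trans (Hg k); rewrite /k; apply: leq_trans (leqnSn _); exact: leq_addr.
have kp : 0 < k%:R :> R by rewrite ltr0n.
have Hinv : (k%:R)^-1 < (c - l) / 2.
  rewrite -(ltr_pM2l kp) mulfV ?gt_eqF //.
  move: Hk; rewrite ltr_pdivrMr ?subr_gt0 //.
  move=> Hk; lra.
move: H2; rewrite ltr_norml => /andP [H2 _].
lra.
Qed.

Lemma eigs_spec (R : realType) n (A : 'M[R]_n) s : is_spectrum A s -> eigs A = s.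
Proof.
move=> Hs; have Hx : is_spectrum A (eigs A) by rewrite /eigs; apply: xgetPex; exists s.
case: Hs Hx => [Ss Ps] [Se Pe].
apply: (sorted_eq (leT := fun x y : R => y <= x)) => //.
- by move=> x y z /= Hyx Hzy; apply: le_trans Hzy Hyx.
- by move=> x y /andP [H1 H2]; apply/le_anti; rewrite H1 H2.
- by apply: prod_XsubC_eq; rewrite -Pe -Ps.
Qed.

Lemma prod_nseq (F : comNzRingType) (T : Type) (G : T -> F) n a :
  \prod_(x <- nseq n a) G x = G a ^+ n.
Proof. by elim: n => [|n IH]; rewrite ?big_nil ?expr0 // big_cons IH exprS. Qed.

Lemma path_nseq (T : Type) (r : rel T) x y n : r x y -> r y y -> path r x (nseq n y).
Proof. by move=> Hxy Hyy; elim: n x Hxy => [|n IH] x Hxy //=; rewrite Hxy IH. Qed.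

Lemma prod_by_class (F : comNzRingType) N m (c : 'I_N -> 'I_m) (G : 'I_N -> F) (H : 'I_m -> F) :
  (forall u, G u = H (c u)) -> \prod_u G u = \prod_i H i ^+ cnt c i.
Proof.
move=> HG; rewrite (partition_big c predT) //=; apply: eq_bigr => i _.
rewrite (eq_bigr (fun _ => H i)); last by move=> u /eqP <-; rewrite HG.
by rewrite prodr_const.
Qed.

Lemma blk_proof a b (Hb : (0 < b)%N) (u : 'I_(a * b)) : (u %/ b < a)%N.
Proof. by rewrite ltn_divLR // ltn_ord. Qed.

Definition blk a b (Hb : (0 < b)%N) (u : 'I_(a * b)) : 'I_a := Ordinal (blk_proof Hb u).

Lemma cnt_blk a b (Hb : (0 < b)%N) (i : 'I_a) : cnt (blk Hb) i = b.
Proof.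
have Hf : forall r : 'I_b, (i * b + r < a * b)%N.
  move=> r; have := ltn_ord i; have := ltn_ord r; nia.
pose f (r : 'I_b) : 'I_(a * b) := Ordinal (Hf r).
have finj : injective f.
  by move=> r1 r2 /(congr1 val) /= /addnI H; apply: val_inj.
rewrite /cnt -[RHS](card_ord b) -(card_codom finj); apply: eq_card => u.
rewrite inE; apply/eqP/codomP => [Hu|[r ->]].
- have Hr : (u %% b < b)%N by rewrite ltn_mod.
  exists (Ordinal Hr); apply: val_inj => /=.
  have := congr1 val Hu => /= <-; exact: divn_eq.
- apply: val_inj => /=; rewrite divnMDl // divn_small ?addn0 //.
Qed.

Lemma path_nseq_cat (T : Type) (r : rel T) x y n s :
  r x y -> r y y -> path r x s -> path r y s -> path r x (nseq n y ++ s).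
Proof.
move=> Hxy Hyy Hx Hy; elim: n x Hxy Hx => [|n IH] x Hxy Hx //=.
by rewrite Hxy IH.
Qed.

Lemma prod_ord2 (F : comNzRingType) (G : 'I_2 -> F) : \prod_(i < 2) G i = G 0 * G 1.
Proof.
rewrite !big_ord_recl big_ord0 mulr1.
by congr (G _ * G _); apply: val_inj.
Qed.

Lemma part1 (R : realType) (j : nat) : (1 <= j)%N -> forall S : {set 'I_(2 * j + 4)}, #|S| = (j + 2)%N ->
     lambda (adj R (looped_complete S)) 1
       - lambda (adj R (looped_complete S)) (2 * j + 4 - j)
     = ((2 * j + 5)%:R + Num.sqrt (4 * j ^ 2 + 16 * j + 17)%:R) / 2.
Proof.
move=> Hj S HS.
set A := adj R (looped_complete S).
pose c (u : 'I_(2 * j + 4)) : 'I_2 := if u \in S then 0 else 1.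
pose B : 'M[R]_2 := const_mx 1.
pose d (i : 'I_2) : R := if i == 0 then 0 else -1.
have HA : forall u v, A u v = B (c u) (c v) + (u == v)%:R * d (c u).
  move=> u v; rewrite /A /adj /looped_complete /B /d /c !mxE.
  case: (eqVneq u v) => [->|ne]; last by rewrite mul0r addr0.
  by case: (v \in S) => /=; rewrite mul1r; lra.
have c0 : cnt c 0 = (j + 2)%N.
  rewrite -HS /cnt; apply: eq_card => u; rewrite !inE /c.
  by case: (u \in S).
have c1 : cnt c 1 = (j + 2)%N.
  have := cardsC S; rewrite card_ord HS => H.
  have -> : cnt c 1 = #|~: S|.
    rewrite /cnt; apply: eq_card => u; rewrite !inE /c.
    by case: (u \in S).
  lia.
have Hc : forall i, (0 < cnt c i)%N.
  move=> i; have [->|] := eqVneq i 0; first by rewrite c0 addn2.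
  move=> ne; have -> : i = 1 by apply: val_inj; case: i ne => [[|[|]]] //.
  by rewrite c1 addn2.
have HP := classL HA Hc.
set J : R := j%:R.
have J0 : 0 <= J by rewrite /J ler0n.
set K : R := (4 * j ^ 2 + 16 * j + 17)%:R.
have KE : K = 4 * J ^+ 2 + 16 * J + 17.
  rewrite /K /J !natrD !natrM; ring.
have K0 : 0 <= K by rewrite /K ler0n.
set sq := Num.sqrt K.
have sq0 : 0 <= sq by rewrite /sq sqrtr_ge0.
have sq2 : sq ^+ 2 = K by rewrite /sq sqr_sqrtr.
pose r1 := ((2 * J + 3) + sq) / 2.
pose r2 := ((2 * J + 3) - sq) / 2.
have HQ : char_poly (Qmx c B d) = ('X - r1%:P) * ('X - r2%:P).
  apply: char_poly22; rewrite /Qmx !mxE /d c0 c1 /= /r1 /r2 ?natrD /J -/J.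
    by lra.
  rewrite -/J. nra.
pose s := r1 :: (nseq j.+1 0 ++ r2 :: nseq j.+1 (-1)).
have Hspec : is_spectrum A s.
  split.
    have Hr1 : 0 <= r1 by rewrite /r1; lra.
    have Hr2 : r2 <= 0 by rewrite /r2; nra.
    have Hr2' : -1 <= r2 by rewrite /r2; nra.
    rewrite /s /= path_nseq_cat //= ?Hr1 ?Hr2 ?Hr2' ?lexx ?path_nseq //; try lra.
  rewrite HP HQ prod_ord2 c0 c1 /d /=.
  have -> : (j + 2).-1 = j.+1 by rewrite addn2.
  have -> : \prod_(x <- s) ('X - x%:P) = ('X - r1%:P) * (('X - 0%:P) ^+ j.+1 *
      (('X - r2%:P) * ('X - (-1)%:P) ^+ j.+1)).
    rewrite /s big_cons; congr (_ * _); rewrite big_cat prod_nseq; congr (_ * _).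
    by rewrite big_cons prod_nseq.
  ring.
rewrite /lambda (eigs_spec Hspec).
have -> : (2 * j + 4 - j).-1 = (j.+1).+2 by lia.
rewrite /s /= nth_cat size_nseq (_ : (j.+1 < j)%N = false) ?subSnn /=; last by lia.
rewrite /r1 !natrD -/J. lra.
Qed.

Lemma blkE a b (Hb : (0 < b)%N) (u : 'I_(a * b)) : val (blk Hb u) = (u %/ b)%N.
Proof. by []. Qed.

Lemma le_bigmax_graph (R : realType) i j n (e : 'M[bool]_n) :
  simple_graph e -> spread_graph R i j e <= spread_max R i j n.
Proof.
move=> He; rewrite /spread_max.
elim: (index_enum _) (mem_index_enum e) => [//|a r IH] /=.
rewrite big_cons in_cons => /orP [/eqP <-|Hr].
  by rewrite He le_max lexx.
by case: ifP => _; rewrite ?IH // le_max IH ?orbT.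
Qed.

Lemma ar (j k' : nat) : ((2*(j+2)*k'.+1 - j).-1 = (k' * (j+2) + (k'*(j+2) + (j+2).-1)).+2)%N.
Proof. rewrite !mulnS addn2 /=; lia. Qed.
Lemma ar2 (a b : nat) : ((a + b).+1 < a)%N = false.
Proof. lia. Qed.
Lemma ar3 (a b : nat) : ((a + b).+1 - a = b.+1)%N.
Proof. lia. Qed.

Lemma part2 (R : realType) (j k' : nat) : (1 <= j)%N ->
  (k'.+1)%:R * (((2 * j + 5)%:R + Num.sqrt (4 * j ^ 2 + 16 * j + 17)%:R) / 2) - 1
    <= spread_max R 0 j (2 * (j + 2) * k'.+1).
Proof.
move=> Hj.
set t := (j + 2)%N. set k := k'.+1.
have Hk : (0 < k)%N by [].
have Ht : (0 < t)%N by rewrite /t addn2.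
pose c := blk Hk : 'I_(2 * t * k) -> 'I_(2 * t).
pose c2 := blk Ht : 'I_(2 * t) -> 'I_2.
pose e : 'M[bool]_(2 * t * k) :=
  \matrix_(u, v) ((u != v) && ((c u == c v) ==> (c u < t)%N)).
have He : simple_graph e.
  apply/andP; split; apply/forallP => u; first apply/forallP => v; rewrite !mxE.
    by rewrite [v == u]eq_sym [c v == c u]eq_sym; case: (eqVneq (c u) (c v)) => [->|].

  by rewrite eqxx.
apply: le_trans (le_bigmax_graph R 0 j He).
set A := adj R e.
pose B : 'M[R]_(2 * t) := \matrix_(i, l) (if i == l then ((i < t)%N)%:R else 1).
pose d (i : 'I_(2 * t)) : R := - ((i < t)%N)%:R.
have HA : forall u v, A u v = B (c u) (c v) + (u == v)%:R * d (c u).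
  move=> u v; rewrite /A /adj /e /B /d !mxE.
  case: (eqVneq u v) => [->|ne] /=; first by rewrite eqxx mul1r subrr.
  by rewrite mul0r addr0; case: (c u == c v).
have Hc : forall i, (0 < cnt c i)%N by move=> i; rewrite cnt_blk.
have HP := classL HA Hc.
pose B2 : 'M[R]_2 := const_mx (k%:R).
pose d2 (b : 'I_2) : R := if b == 0 then -1 else - k%:R.
have c2E : forall i : 'I_(2 * t), (c2 i == 0) = (i < t)%N.
  by move=> i; rewrite -val_eqE /= eqn0Ngt divn_gt0 // -ltnNge.
have HQA : forall i l, Qmx c B d i l = B2 (c2 i) (c2 l) + (i == l)%:R * d2 (c2 i).
  move=> i l; rewrite /Qmx /B2 /d2 /B /d !mxE cnt_blk.
  case: (eqVneq i l) => [->|ne]; last by rewrite !mul0r !addr0 mulr1.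
  by rewrite !mul1r c2E; case: (l < t)%N => /=; lra.
have Hc2 : forall b, (0 < cnt c2 b)%N by move=> b; rewrite cnt_blk.
have HQ := classL HQA Hc2.
set J : R := j%:R.
have J0 : 0 <= J by rewrite /J ler0n.
set K : R := (4 * j ^ 2 + 16 * j + 17)%:R.
have KE : K = 4 * J ^+ 2 + 16 * J + 17.
  rewrite /K /J !natrD !natrM; ring.
have K0 : 0 <= K by rewrite /K ler0n.
set sq := Num.sqrt K.
have sq0 : 0 <= sq by rewrite /sq sqrtr_ge0.
have sq2 : sq ^+ 2 = K by rewrite /sq sqr_sqrtr.
set kk : R := k%:R.
have kk1 : 1 <= kk by rewrite /kk ler1n.
set T : R := t%:R.
have TE : T = J + 2 by rewrite /T /t natrD.
pose tr := (2 * T - 1) * kk - 1.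
pose dt := (T * kk - 1) * (T * kk - kk) - (T * kk) ^+ 2.
pose disc := K * kk ^+ 2 - 2 * kk + 1.
have discE : disc = tr ^+ 2 - 4 * dt by rewrite /disc /tr /dt KE TE; ring.
have disc0 : 0 <= disc by rewrite /disc KE; nra.
set sd := Num.sqrt disc.
have sd0 : 0 <= sd by rewrite /sd sqrtr_ge0.
have sd2 : sd ^+ 2 = disc by rewrite /sd sqr_sqrtr.
pose r1 := (tr + sd) / 2.
pose r2 := (tr - sd) / 2.
have HQ2 : char_poly (Qmx c2 B2 d2) = ('X - r1%:P) * ('X - r2%:P).
  apply: char_poly22; rewrite /Qmx /B2 /d2 !mxE !cnt_blk /= -/kk -/T /r1 /r2.
    rewrite /tr; lra.
  have H := sd2; rewrite discE /dt in H; rewrite /tr in H *; nra.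
pose dd (b : 'I_2) : R := if b == 0 then -1 else 0.
have Hprod1 : \prod_i ('X - (d i)%:P) ^+ (cnt c i).-1 =
    (('X - (-1)%:P) ^+ k.-1) ^+ t * (('X - 0%:P) ^+ k.-1) ^+ t.
  rewrite (@prod_by_class _ _ _ c2 _ (fun b => ('X - (dd b)%:P) ^+ k.-1)).
    by rewrite prod_ord2 !cnt_blk.
  by move=> i; rewrite cnt_blk /d /dd c2E; case: (i < t)%N; rewrite ?oppr0.
have Hprod2 : \prod_b ('X - (d2 b)%:P) ^+ (cnt c2 b).-1 =
    ('X - (-1)%:P) ^+ t.-1 * ('X - (- kk)%:P) ^+ t.-1.
  by rewrite prod_ord2 !cnt_blk.
pose n0 := (k.-1 * t)%N.
pose n1 := (k.-1 * t + t.-1)%N.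
pose s := r1 :: (nseq n0 0 ++ (nseq n1 (-1) ++ (r2 :: nseq t.-1 (- kk)))).
have Hcp : char_poly A = \prod_(x <- s) ('X - x%:P).
  have -> : \prod_(x <- s) ('X - x%:P) = ('X - r1%:P) * (('X - 0%:P) ^+ n0 *
      (('X - (-1)%:P) ^+ n1 * (('X - r2%:P) * ('X - (- kk)%:P) ^+ t.-1))).
    rewrite /s big_cons; congr (_ * _); rewrite big_cat prod_nseq; congr (_ * _).
    by rewrite big_cat prod_nseq big_cons prod_nseq.
  rewrite HP HQ Hprod1 Hprod2 HQ2 /n0 /n1 exprD !exprM; ring.
have J1 : 1 <= J by rewrite /J ler1n.
have tr0 : 0 <= tr by rewrite /tr TE; nra.
have hkk : 0 <= (J + 2) * (kk * (kk - 1)).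
  by apply: mulr_ge0; [lra | apply: mulr_ge0; lra].
have Hd1 : (tr + 2) ^+ 2 <= disc by rewrite /disc /tr KE TE; nra.
have Hd2 : disc <= (tr + 2 * kk) ^+ 2 by rewrite /disc /tr KE TE; nra.
have Hr1 : 0 <= r1 by rewrite /r1; lra.
have Hr2 : r2 <= -1 by rewrite /r2; nra.
have Hr2' : - kk <= r2 by rewrite /r2; nra.
have Hsort : sorted (fun x y : R => y <= x) s.
  have P3 : forall x, r2 <= x -> path (fun x y : R => y <= x) x (r2 :: nseq t.-1 (- kk)).
    by move=> x Hx /=; rewrite Hx path_nseq.
  have P2 : forall x, -1 <= x -> path (fun x y : R => y <= x) x
      (nseq n1 (-1) ++ (r2 :: nseq t.-1 (- kk))).
    by move=> x Hx; rewrite path_nseq_cat ?lexx ?P3 //; lra.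
  by rewrite /s /= path_nseq_cat ?lexx ?P2 //; lra.
have Hspec : is_spectrum A s by split.
rewrite /spread_graph -/A /lambda (eigs_spec Hspec).
have -> : (2 * t * k - j).-1 = (n0 + n1).+2 by exact: ar.
rewrite /s /= nth_cat size_nseq ar2 ar3 nth_cat size_nseq.
have -> : (n1.+1 < n1)%N = false by rewrite ltnNge leqnSn.
rewrite subSnn /= nth_nseq.
have -> : (0 < t.-1)%N by rewrite /t addn2.
have sq1 : 1 <= sq by rewrite KE in sq2; nra.
have Hsd : sq * kk - 1 <= sd.
  have h2 : (sq * kk - 1) ^+ 2 <= disc by rewrite /disc -sq2; nra.
  nra.
rewrite /r1 /tr TE !natrD -/J; lra.
Qed.
End Aux.
Import Aux.

Theorem mainTheorem10 (R : realType) (j : nat) : (1 <= j)%N ->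
  (forall S : {set 'I_(2 * j + 4)}, #|S| = (j + 2)%N ->
     lambda (adj R (looped_complete S)) 1
       - lambda (adj R (looped_complete S)) (2 * j + 4 - j)
     = ((2 * j + 5)%:R + Num.sqrt (4 * j ^ 2 + 16 * j + 17)%:R) / 2)
  /\
  (forall l : R,
     (fun n : nat => spread_max R 0 j n / n%:R) @ \oo --> l ->
     ((2 * j + 5)%:R + Num.sqrt (4 * j ^ 2 + 16 * j + 17)%:R) / (4 * (j + 2))%:R
       <= l).
Proof.
move=> Hj; split; first exact: part1.
move=> l Hl.
apply: (lim_lb (g := fun k => (2 * (j + 2) * k)%N) _ _ Hl).
  by move=> k; apply: leq_pmull; rewrite muln_gt0 addn2.
case=> [//|k'] _ /=.
have H := part2 R k' Hj.
set X := spread_max R 0 j (2 * (j + 2) * k'.+1) in H *.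
set A := (2 * j + 5)%:R + _ in H *.
set kk : R := (k'.+1)%:R in H *.
set J : R := j%:R.
have J0 : 0 <= J by rewrite /J ler0n.
have kk1 : 1 <= kk by rewrite /kk ler1n.
have NE : (2 * (j + 2) * k'.+1)%:R = 2 * (J + 2) * kk :> R by rewrite !natrM natrD.
have DE : (4 * (j + 2))%:R = 4 * (J + 2) :> R by rewrite !natrM natrD.
rewrite NE DE ler_pdivlMr; last by apply: mulr_gt0; [apply: mulr_gt0|]; lra.
have -> : (A / (4 * (J + 2)) - kk^-1) * (2 * (J + 2) * kk) = kk * (A / 2) - 2 * (J + 2).
  field; apply/andP; split; rewrite ?gt_eqF //; lra.
lra.
Qed.
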